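(* Let $0\le k\le n$, let $\bar g\in G_k$ have type $\boldsymbol\lambda\in\mathcal{P}(\Phi)$, and let $g=\begin{bmatrix}\bar g&0\\0&I_{n-k}\end{bmatrix}\in G_n$. Suppose all parts of the partition $\boldsymbol\lambda^e=\boldsymbol\lambda(t-1)$ are strictly bigger than $1$. Then an $n\times n$ matrix $\begin{bmatrix}A&B\\C&D\end{bmatrix}$ over $\mathbb F_q$, written in $(k\,|\,n-k)$-block form, which commutes with $g$ is invertible if and only if both $A$ and $D$ are invertible.
   Context: $q$ is a prime power, $G_n=GL_n(\mathbb F_q)$. $\Phi$ is the set of monic irreducible polynomials in $\mathbb F_q[t]$ other than $t$; $\mathcal{P}(\Phi)$ is the set of finitely supported maps from $\Phi$ to partitions. The type of $\bar g\in G_k$ is the unique $\boldsymbol\lambda\in\mathcal{P}(\Phi)$ such that $\mathbb F_q^k$, viewed as an $\mathbb F_q[t]$-module with $t$ acting by $\bar g$, is isomorphic to $\bigoplus_{f,i}\mathbb F_q[t]/(f^{\boldsymbol\lambda_i(f)})$, where $\boldsymbol\lambda(f)=(\boldsymbol\lambda_1(f),\boldsymbol\lambda_2(f),\dots)$. *)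

(* Defs.v *)
From HB Require Import structures.
From mathcomp Require Import all_boot all_order all_algebra all_field.
Set Implicit Arguments. Unset Strict Implicit. Unset Printing Implicit Defensive.
Import Order.TTheory GRing.Theory Num.Theory.
Local Open Scope ring_scope.

Section Types.
Variable F : finFieldType.

Definition in_Phi (f : {poly F}) : Prop :=
  [/\ f \is monic, irreducible_poly f & f != 'X].

Definition is_partition (s : seq nat) : bool :=
  sorted geq s && all (fun m => 0 < m)%N s.

Definition type_blocks (lam : {poly F} -> seq nat) (s : seq {poly F})
  : seq {poly F} :=
  flatten [seq [seq f ^+ m | m <- lam f] | f <- s].

(* the matrix of t acting (on row vectors) on the F[t]-module
   (+)_j F[t]/(ps_j), in the bases 1, t, ..., t^(deg ps_j - 1) *)
Definition blocks_mx (ps : seq {poly F}) :=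
  \mxdiag_(i < size ps) companionmx (polyseq ps`_i).

(* gbar (acting on row vectors of F^k) has type lam: lam is a finitely
   supported map Phi -> partitions, and F^k as an F[t]-module (t acting
   by gbar) is isomorphic to (+)_{f,i} F[t]/(f^(lam_i f)). *)
Definition has_type (k : nat) (gbar : 'M[F]_k) (lam : {poly F} -> seq nat)
  : Prop :=
  [/\ forall f, lam f != [::] -> in_Phi f,
      forall f, is_partition (lam f) &
      exists s : seq {poly F},
        [/\ uniq s, forall f, lam f != [::] -> f \in s &
          exists P : 'M[F]_(\sum_(i < size (type_blocks lam s))
                               (size (polyseq (type_blocks lam s)`_i)).-1, k),
            [/\ row_free P, row_full P &
                blocks_mx (type_blocks lam s) *m P = P *m gbar]]].

End Types.

(* Main.v *)
Require Import Defs.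
From HB Require Import structures.
From mathcomp Require Import all_boot all_order all_algebra all_field.
From mathcomp Require Import zify.
Import Order.TTheory GRing.Theory Num.Theory.
Local Open Scope ring_scope.
Set Implicit Arguments. Unset Strict Implicit.

Definition fixprop (F : fieldType) (N : nat) (M : 'M[F]_N) :=
  forall (w : 'rV_N) (v : 'cV_N), w *m M = w -> M *m v = v -> w *m v = 0.

Lemma companion_fix (F : fieldType) (p : {poly F}) :
  p \is monic -> (p.[1] = 0 -> p^`().[1] = 0) -> fixprop (companionmx p).
Proof.
move=> mon hder w v Hw Hv.
set d := (size p).-1 in w v Hw Hv *.
have p0 : p != 0 by apply: monic_neq0.
have sp : size p = d.+1 by rewrite /d prednK // size_poly_gt0.
have lc : p`_d = 1 by move/monicP: mon; rewrite /lead_coef sp.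
have [d0|dpos] := posnP d.
  by apply/matrixP => i j; rewrite !mxE big1 // => k; have := ltn_ord k; rewrite {2}d0.
set i0 : 'I_d := Ordinal dpos.
have dl : (d.-1 < d)%N by rewrite prednK.
set il : 'I_d := Ordinal dl.
have Ce : forall i j : 'I_d, companionmx p i j = if (i == d.-1 :> nat) then - p`_j else (i.+1 == j :> nat)%:R.
  by move=> i j; rewrite mxE.
have step : forall (i : 'I_d) (h : (i.+1 < d)%N), v i 0 = v (Ordinal h) 0.
  move=> i h; rewrite -[in LHS]Hv mxE (bigD1 (Ordinal h)) //= Ce.
  rewrite ifF; last by apply/negbTE; rewrite neq_ltn -ltnS prednK // h.
  rewrite eqxx mul1r big1 ?addr0 // => j hj; rewrite Ce ifF.
    have -> : (i.+1 == j :> nat) = false.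
      by apply/negbTE; move: hj; apply: contra => /eqP e; apply/eqP/val_inj.
    by rewrite mul0r.
  by apply/negbTE; rewrite neq_ltn -ltnS prednK // h.
have vc : forall i : 'I_d, v i 0 = v i0 0.
  suff : forall n (i : 'I_d), val i = n -> v i 0 = v i0 0 by move=> H i; apply: (H i).
  elim=> [|n IH] i hi; first by rewrite (_ : i = i0) //; apply: val_inj.
  have hn : (n < d)%N by move: (ltn_ord i); rewrite hi; apply: ltnW.
  have h : ((Ordinal hn).+1 < d)%N by rewrite /= -hi ltn_ord.
  rewrite -(IH (Ordinal hn)) // (step _ h); rewrite (_ : i = Ordinal h) //; exact: val_inj.
set c := v i0 0.
have vE : v = c *: const_mx 1.
  by apply/matrixP => i j; rewrite !mxE mulr1 (ord1 j) vc.
have hlast : c * p.[1] = 0.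
  have := congr1 (fun M : 'cV_d => M il 0) Hv; rewrite /= mxE vc.
  under eq_bigr => j _ do rewrite Ce /= eqxx vc.
  rewrite (horner_coef_wide 1 (leqnn _)) sp big_ord_recr /= lc -/c -mulr_suml => e.
  under eq_bigr do rewrite expr1n mulr1.
  by rewrite expr1n mulr1 mulrDr mulr1 -[X in _ + X]e sumrN mulNr mulrC subrr.
have [c0|cn0] := eqVneq c 0.
  by rewrite vE c0 scale0r mulmx0.
have p1 : p.[1] = 0 by move/eqP: hlast; rewrite mulf_eq0 (negPf cn0) => /eqP.
have d1 := hder p1.
set z : 'cV[F]_d := \col_i (i%:R).
have Hz : (companionmx p - 1%:M) *m z = const_mx 1.
  have Sd : \sum_(i < d) p`_i *+ i = - d%:R.
    have E1 : \sum_(i < d.+1) p`_i *+ i = \sum_(i < d) p`_i.+1 *+ i.+1.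
      by rewrite big_ord_recl mulr0n add0r.
    have E2 : \sum_(i < d.+1) p`_i *+ i = \sum_(i < d) p`_i *+ i + d%:R.
      by rewrite big_ord_recr /= lc.
    have E3 : p^`().[1] = \sum_(i < d) p`_i.+1 *+ i.+1.
      rewrite (horner_coef_wide 1 (n := d)); last by rewrite -ltnS -sp lt_size_deriv.
      by apply: eq_bigr => i _; rewrite expr1n mulr1 coef_deriv.
    by apply/eqP; rewrite -subr_eq0 opprK -E2 E1 -E3 d1.
  rewrite mulmxBl mul1mx.
  apply/matrixP => i j; rewrite (ord1 j) !mxE.
  under eq_bigr do rewrite Ce mxE.
  case: (eqVneq (i : nat) d.-1) => hi.
    under eq_bigr do rewrite mulNr mulr_natr.
    rewrite sumrN Sd opprK hi.
    by rewrite -{1}(prednK dpos) -addn1 natrD addrAC subrr add0r.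
  have h : (i.+1 < d)%N by move: (ltn_ord i) hi; rewrite -/d; lia.
  rewrite (bigD1 (Ordinal h)) //= eqxx.
  rewrite mul1r big1 ?addr0; last first.
    move=> j' hj.
    have -> : (i.+1 == j' :> nat) = false.
      by apply/negbTE; move: hj; apply: contra => /eqP e; apply/eqP/val_inj.
    by rewrite mul0r.
  by rewrite -addn1 natrD addrAC subrr add0r.
rewrite vE -Hz scalemxAr mulmxA mulmxBr Hw mulmx1 subrr mul0mx.
by [].
Qed.

Lemma fix_diag (F : fieldType) (N : nat) (p_ : 'I_N -> nat)
  (B_ : forall i, 'M[F]_(p_ i)) :
  (forall i, fixprop (B_ i)) -> fixprop (\mxdiag_i B_ i).
Proof.
move=> HB w v Hw Hv.
rewrite -(submxrowK w) -(submxcolK v) in Hw Hv *.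
rewrite mul_mxrow_mxcol big1 // => i _.
apply: HB.
  by rewrite mul_mxrow_mxdiag in Hw; move/eq_mxrowP: Hw => /(_ i).
by rewrite mul_mxdiag_mxcol in Hv; move/eq_mxcolP: Hv => /(_ i).
Qed.

Lemma fix_conj (F : fieldType) (N k : nat) (J : 'M[F]_N) (P : 'M[F]_(N, k))
  (g : 'M[F]_k) :
  row_free P -> row_full P -> J *m P = P *m g -> fixprop J -> fixprop g.
Proof.
move=> rf rfu e HJ w v Hw Hv.
have wP : w = (w *m pinvmx P) *m P by rewrite mulmxKpV // submx_full.
rewrite wP -mulmxA; apply: HJ.
  apply: (row_free_inj rf); rewrite -mulmxA e mulmxA -wP //.
by rewrite mulmxA e -mulmxA Hv.
Qed.

Lemma block_ok (F : finFieldType) (f : {poly F}) (m : nat) :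
  in_Phi f -> (0 < m)%N -> (f = 'X - 1 -> (1 < m)%N) ->
  (f ^+ m) \is monic /\ ((f ^+ m).[1] = 0 -> (f ^+ m)^`().[1] = 0).
Proof.
move=> [mf irf fX] m0 hX; split; first exact: monic_exp.
rewrite horner_exp => /eqP; rewrite expf_eq0 m0 /= => /eqP f1.
have dv : ('X - 1%:P) %| f by rewrite dvdp_XsubCl; apply/eqP.
have fE : f = 'X - 1.
  case: (irredp_XsubCP irf dv) => [h|h].
    by move/eqp_size: h; rewrite size_XsubC size_poly1.
  by rewrite -polyC1; apply/esym/eqP; rewrite -eqp_monic ?monicXsubC.
have m1 := hX fE.
by rewrite deriv_exp hornerMn hornerM horner_exp f1 expr0n /= -(subnKC m1) /= mulr0 mul0rn.
Qed.

Lemma mem_type_blocks (F : finFieldType) (lam : {poly F} -> seq nat) s x :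
  x \in type_blocks lam s -> exists f m, m \in lam f /\ x = f ^+ m.
Proof.
case/flattenP => s0 /mapP [f _ ->] /mapP [m hm ->]; by exists f, m.
Qed.

Lemma gbar_fix (F : finFieldType) (k : nat) (gbar : 'M[F]_k) lam :
  has_type gbar lam -> all (fun m => 1 < m)%N (lam ('X - 1)) -> fixprop gbar.
Proof.
move=> [Hphi Hpart [s [us hs [P [rf rfu e]]]]] Hall.
apply: (fix_conj rf rfu e); rewrite /blocks_mx; apply: fix_diag => i.
have := mem_nth 0 (ltn_ord i).
case/mem_type_blocks => f [m [hm ->]].
have nl : lam f != [::] by apply/eqP => h; rewrite h in hm.
have m0 : (0 < m)%N by move: (Hpart f) => /andP [_ /allP]; apply.
have mX : f = 'X - 1 -> (1 < m)%N by move=> fE; rewrite fE in hm; exact: (allP Hall).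
have [mo hd] := block_ok (Hphi f nl) m0 mX.
exact: companion_fix.
Qed.

Lemma fix_mat (F : fieldType) (k a b : nat) (g : 'M[F]_k) (X : 'M[F]_(k, a))
  (Y : 'M[F]_(b, k)) : fixprop g -> g *m X = X -> Y *m g = Y -> Y *m X = 0.
Proof.
move=> fg hX hY; apply/row_matrixP => i; rewrite row_mul row0.
apply/matrixP => z j; rewrite (ord1 z).
have h1 : row i Y *m g = row i Y by rewrite -row_mul hY.
have h2 : g *m col j X = col j X by rewrite !colE mulmxA hX.
have := congr1 (fun M : 'M_(1,1) => M 0 0) (fg (row i Y) (col j X) h1 h2).
rewrite /= !mxE => H; rewrite -[in RHS]H; apply: eq_bigr => l _; rewrite !mxE //.
Qed.

Lemma comm_inv (F : fieldType) (k : nat) (A g : 'M[F]_k) :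
  A \in unitmx -> A *m g = g *m A -> invmx A *m g = g *m invmx A.
Proof.
move=> uA e.
rewrite -[LHS]mulmx1 -(mulmxV uA) !mulmxA -(mulmxA (invmx A) g A) -e.
by rewrite mulmxA mulVmx // mul1mx.
Qed.

Lemma comm_eqs (F : fieldType) (k l : nat) (gbar : 'M[F]_k) A B C (D : 'M[F]_l) :
  block_mx A B C D *m block_mx gbar 0 0 1%:M = block_mx gbar 0 0 1%:M *m block_mx A B C D ->
  [/\ A *m gbar = gbar *m A, gbar *m B = B & C *m gbar = C].
Proof.
rewrite !mulmx_block => /eq_block_mx [e1 e2 e3 e4].
move: e1 e2 e3; rewrite !mulmx0 !mul0mx !addr0 !add0r mulmx1 mul1mx => -> <- ->.
by [].
Qed.

Unset Implicit Arguments.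
Set Strict Implicit.

Theorem corollary2p7 (F : finFieldType) (k n : nat) (Hkn : (k <= n)%N)
  (gbar : 'M[F]_k) (lam : {poly F} -> seq nat) :
  gbar \in unitmx ->
  has_type gbar lam ->
  all (fun m => 1 < m)%N (lam ('X - 1)) ->
  forall (A : 'M[F]_k) (B : 'M[F]_(k, n - k)) (C : 'M[F]_(n - k, k))
         (D : 'M[F]_(n - k)),
    let g := block_mx gbar 0 0 (1%:M : 'M[F]_(n - k)) in
    let M := block_mx A B C D in
    M *m g = g *m M ->
    (M \in unitmx <-> (A \in unitmx) /\ (D \in unitmx)).
Proof.
move=> ug ht hall A B C D g M Hc.
have fg := gbar_fix ht hall.
have [eA eB eC] := comm_eqs Hc.
split.
  move=> uM.
  have HN : invmx M *m g = g *m invmx M by apply: comm_inv.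
  rewrite -(submxK (invmx M)) in HN.
  have [_ eB' eC'] := comm_eqs HN.
  have := mulmxV uM; rewrite -(submxK (invmx M)) /M mulmx_block (scalar_mx_block k (n - k)).
  move/eq_block_mx => [e1 _ _ e4].
  have CB' : C *m ursubmx (invmx M) = 0 by apply: (fix_mat fg).
  have C'B : dlsubmx (invmx M) *m B = 0 by apply: (fix_mat fg).
  split; last first.
    by rewrite CB' add0r in e4; case: (mulmx1_unit e4).
  set X := B *m dlsubmx (invmx M).
  have : A *m (ulsubmx (invmx M) *m (1%:M + X)) = 1%:M.
    rewrite mulmxA (_ : A *m ulsubmx (invmx M) = 1%:M - X); last by rewrite -e1 addrK.
    rewrite mulmxDr mulmx1 mulmxBl mul1mx /X !mulmxA -(mulmxA B) C'B mulmx0 mul0mx.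
    by rewrite subr0 addrNK.
  by case/mulmx1_unit.
move=> [uA uD].
set X := invmx A *m B.
have hX : gbar *m X = X by rewrite /X mulmxA -comm_inv // -mulmxA eB.
have CX : C *m X = 0 by apply: (fix_mat fg).
have E : M *m block_mx 1%:M (- X) 0 1%:M = block_mx A 0 C D.
  rewrite /M mulmx_block !mulmx0 !addr0 !mulmx1 !mulmxN CX oppr0 add0r.
  by rewrite /X mulmxA mulmxV // mul1mx addNr.
rewrite unitmxE; have := congr1 determinant E.
rewrite det_mulmx det_ublock !det1 mulr1 det_lblock => dE.
by rewrite -[\det M]mulr1 dE unitrM -!unitmxE uA uD.
Qed.
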